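(* Let $X$ be compact and $\alpha$ a standard cocycle representing $a$. Then $\|\widehat g\|_\alpha=\sup_{x\in X}|\rho_{x,\alpha}(\widehat g)|$ is finite for every $\widehat g\in\widehat G_a$, and $\|\cdot\|_\alpha$ is a seminorm on $\widehat G_a$: $\|\widehat g^{-1}\|_\alpha=\|\widehat g\|_\alpha$ and $\|\widehat g\widehat h\|_\alpha\le\|\widehat g\|_\alpha+\|\widehat h\|_\alpha$ for all $\widehat g,\widehat h\in\widehat G_a$.
   Context: $A$ is $\mathbb{Z}$ or the discrete group $\mathbb{R}$. $X$ is a path-connected space, $a\in\mathrm{H}^1(X;A)$, $\pi\colon\widehat X_a\to X$ a principal $A$-bundle with holonomy $a$, $T_r$ the action of $r\in A$. $\widehat G_a$ is the group of homeomorphisms $\widehat g$ of $\widehat X_a$ with $\pi\circ\widehat g=g\circ\pi$ for a homeomorphism $g$ of $X$. A real singular $1$-cocycle $\alpha$ representing $a$ is standard if there is a continuous $\theta\colon\widehat X_a\to\mathbb{R}$ with $d\theta=\pi^*\alpha$ and $\theta(T_r\widehat y)=\theta(\widehat y)+r$ for all $\widehat y,r$. Then $\rho_{x,\alpha}(\widehat g)=\theta(\widehat g(\widehat x))-\theta(\widehat x)$ for any $\widehat x\in\pi^{-1}(x)$. *)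

(* Defs.v *)
From HB Require Import structures.
From mathcomp Require Import all_boot all_order all_algebra.
From mathcomp Require Import all_classical all_reals all_analysis.
Set Implicit Arguments. Unset Strict Implicit. Unset Printing Implicit Defensive.
Import Order.TTheory GRing.Theory Num.Theory.
Import numFieldNormedType.Exports.
Local Open Scope classical_set_scope.
Local Open Scope ring_scope.

Section Defs.
Variable R : realType.

(* A is Z or the (discrete) group R, given as an abelian group with an
   additive injective embedding iota into R whose image is Z or all of R. *)
Definition A_is_Z_or_R (A : zmodType) (iota : A -> R) : Prop :=
  (forall r s, iota (r + s) = iota r + iota s) /\ injective iota /\
  (range iota = range (fun z : int => z%:~R) \/ range iota = setT).

(* singular 1-simplices are modelled as maps R -> X continuous on [0,1] *)
Definition path_connected (X : topologicalType) : Prop :=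
  (exists x : X, True) /\
  forall x y : X, exists g : R -> X,
    {within `[0, 1], continuous g} /\ g 0 = x /\ g 1 = y.

Definition homeo (X : topologicalType) (f : X -> X) : Prop :=
  continuous f /\ exists f' : X -> X, cancel f f' /\ cancel f' f /\ continuous f'.

(* principal A-bundle (A discrete): free action of A on Xh by homeomorphisms
   preserving fibres of pi, locally trivial: pi^-1(U) = U x A via (u,r) |-> T r (s u) *)
Definition principal_bundle (A : zmodType) (X Xh : topologicalType)
  (pi : Xh -> X) (T : A -> Xh -> Xh) : Prop :=
  continuous pi /\
  (forall y, T 0 y = y) /\ (forall r s y, T (r + s) y = T r (T s y)) /\
  (forall r, continuous (T r)) /\ (forall r y, pi (T r y) = pi y) /\
  forall x : X, exists (U : set X) (s : X -> Xh),
    open U /\ U x /\ {within U, continuous s} /\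
    (forall u, U u -> pi (s u) = u) /\
    (forall r, open (T r @` (s @` U))) /\
    (forall y, U (pi y) -> exists! p : X * A, U p.1 /\ y = T p.2 (s p.1)).

Definition Delta2 : set (R * R) := [set p | 0 <= p.1 /\ 0 <= p.2 /\ p.1 + p.2 <= 1].
Definition face0 (t : R) : R * R := (1 - t, t).
Definition face1 (t : R) : R * R := (0, t).
Definition face2 (t : R) : R * R := (t, 0).

(* real singular 1-cochain = function on singular 1-simplices *)
Definition singular_1cocycle (X : topologicalType) (alpha : (R -> X) -> R) : Prop :=
  forall tau : R * R -> X, {within Delta2, continuous tau} ->
    alpha (tau \o face0) - alpha (tau \o face1) + alpha (tau \o face2) = 0.

(* theta witnesses that alpha is standard: d theta = pi^* alpha, theta(T_r y) = theta y + r *)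
Definition standard_witness (A : zmodType) (iota : A -> R) (X Xh : topologicalType)
  (pi : Xh -> X) (T : A -> Xh -> Xh) (alpha : (R -> X) -> R) (theta : Xh -> R) : Prop :=
  continuous theta /\
  (forall r y, theta (T r y) = theta y + iota r) /\
  (forall sigma : R -> Xh, {within `[0, 1], continuous sigma} ->
     theta (sigma 1) - theta (sigma 0) = alpha (pi \o sigma)).

Definition in_Ghat (A : zmodType) (X Xh : topologicalType)
  (pi : Xh -> X) (T : A -> Xh -> Xh) (gh : Xh -> Xh) : Prop :=
  homeo gh /\ (exists g : X -> X, homeo g /\ pi \o gh = g \o pi) /\
  (forall r, gh \o T r = T r \o gh).

(* rho_{x,alpha}(gh) = theta(gh xh) - theta xh for xh := lift x in pi^-1(x);
   the choice of the lifts is an arbitrary function lift with pi \o lift = id *)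
Definition rho (X Xh : topologicalType) (lift : X -> Xh) (theta : Xh -> R)
  (x : X) (gh : Xh -> Xh) : R := theta (gh (lift x)) - theta (lift x).

Definition rho_abs_set (X Xh : topologicalType) (lift : X -> Xh) (theta : Xh -> R)
  (gh : Xh -> Xh) : set R := [set `|rho lift theta x gh| | x in [set: X]].

Definition seminorm_alpha (X Xh : topologicalType) (lift : X -> Xh) (theta : Xh -> R)
  (gh : Xh -> Xh) : R := sup (rho_abs_set lift theta gh).

End Defs.

(* Main.v *)
Require Import Defs.
From HB Require Import structures.
From mathcomp Require Import all_boot all_order all_algebra.
From mathcomp Require Import all_classical all_reals all_analysis.
Import Order.TTheory GRing.Theory Num.Theory.
Import numFieldNormedType.Exports.
Local Open Scope classical_set_scope.
Local Open Scope ring_scope.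

Section S.

Variables (R : realType) (A : zmodType) (iota : A -> R)
  (X Xh : topologicalType) (pi : Xh -> X) (T : A -> Xh -> Xh)
  (theta : Xh -> R) (lift : X -> Xh).
Hypothesis PB : principal_bundle pi T.
Hypothesis thT : forall r y, theta (T r y) = theta y + iota r.
Hypothesis hlift : forall x, pi (lift x) = x.

Lemma fibre y : exists r, y = T r (lift (pi y)).
Proof.
case: PB => _ [T0 [TD [_ [piT loc]]]].
have [U [s [_ [Ux [_ [pis [_ uniq]]]]]]] := loc (pi y).
have [[p1 p2] [[/= Up1 ey] _]] := uniq y Ux.
have [[q1 q2] [[/= Uq1 el] _]] := uniq (lift (pi y)) (eq_ind_r U Ux (hlift _)).
have e1 : p1 = pi y by rewrite ey piT pis.
have e2 : q1 = pi y by rewrite -[in RHS](hlift (pi y)) el piT pis.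
exists (p2 - q2); rewrite el -TD subrK e2 -e1 -ey //.
Qed.

Definition ff (gh : Xh -> Xh) y := theta (gh y) - theta y.

Lemma ff_T gh : (forall r, gh \o T r = T r \o gh) -> forall r y, ff gh (T r y) = ff gh y.
Proof.
move=> c r y; rewrite /ff.
have := congr1 (fun f => f y) (c r) => /= ->.
rewrite !thT opprD addrACA subrr addr0 //.
Qed.

Lemma ff_lift gh : (forall r, gh \o T r = T r \o gh) -> forall y, ff gh y = ff gh (lift (pi y)).
Proof. by move=> c y; have [r {1}->] := fibre y; rewrite ff_T. Qed.

Lemma cont_F gh : continuous theta -> continuous gh -> (forall r, gh \o T r = T r \o gh) ->
  continuous (fun x => ff gh (lift x)).
Proof.
move=> cth cgh c x.
have fl y : ff gh y = ff gh (lift (pi y)) by apply: ff_lift.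
case: PB => _ [T0 [TD [_ [piT loc]]]].
have [U [s [oU [Ux [cs [pis _]]]]]] := loc x.
move: cs; rewrite continuous_open_subspace // => cs.
have cf : continuous (ff gh).
  move=> y; rewrite /ff; apply: cvgB; last exact: cth.
  apply: continuous_comp; [exact: cgh | exact: cth].
have e : {near x, (ff gh \o s) =1 (fun x => ff gh (lift x))}.
  near=> u => /=; rewrite fl pis //.
  near: u; apply: open_nbhs_nbhs; split => //.
rewrite /continuous_at /=.
have -> : ff gh (lift x) = (ff gh \o s) x by rewrite /= [RHS]fl pis.
apply: cvg_trans; first exact: near_eq_cvg e.
apply: continuous_comp; [exact: (cs _ (mem_set Ux)) | exact: cf].
Unshelve. all: by end_near.
Qed.
End S.

Theorem lemma4p1 (R : realType) (A : zmodType) (iota : A -> R)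
  (X Xh : topologicalType) (pi : Xh -> X) (T : A -> Xh -> Xh)
  (alpha : (R -> X) -> R) (theta : Xh -> R) (lift : X -> Xh) :
  A_is_Z_or_R iota ->
  path_connected R X ->
  compact [set: X] ->
  principal_bundle pi T ->
  singular_1cocycle alpha ->
  standard_witness iota pi T alpha theta ->
  (forall x, pi (lift x) = x) ->
  (forall gh, in_Ghat pi T gh -> has_ubound (rho_abs_set lift theta gh)) /\
  (forall gh gh', in_Ghat pi T gh -> cancel gh gh' -> cancel gh' gh ->
     seminorm_alpha lift theta gh' = seminorm_alpha lift theta gh) /\
  (forall gh hh, in_Ghat pi T gh -> in_Ghat pi T hh ->
     seminorm_alpha lift theta (gh \o hh)
       <= seminorm_alpha lift theta gh + seminorm_alpha lift theta hh).

Proof.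
move=> hA [[x0 _] _] hcomp PB hcoc [cth [thT _]] hlift.
have rhoE gh x : rho lift theta x gh = ff _ _ theta gh (lift x) by [].
have fl gh : (forall r, gh \o T r = T r \o gh) ->
    forall y, ff _ _ theta gh y = ff _ _ theta gh (lift (pi y)).
  by move=> c y; exact: (@ff_lift _ _ _ _ _ _ _ _ _ PB thT hlift _ c).
have bnd gh : in_Ghat pi T gh -> has_ubound (rho_abs_set lift theta gh).
  case=> [[cgh _] [_ c]].
  have cF := @cont_F _ _ _ _ _ _ _ _ _ PB thT hlift _ cth cgh c.
  have := compact_bounded (continuous_compact (continuous_subspaceT cF) hcomp).
  case=> M0 [_ HM]; exists (M0 + 1) => _ [x _ <-].
  apply: (HM (M0 + 1)); first by rewrite ltrDl.
  by exists x.
have ne gh : rho_abs_set lift theta gh !=set0.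
  by exists `|rho lift theta x0 gh|; exists x0.
split => //; split.
  move=> gh gh' hg can1 can2.
  have [[cgh _] [_ c]] := hg.
  have c' r : gh' \o T r = T r \o gh'.
    apply: funext => y /=.
    have := congr1 (fun f => f (gh' y)) (c r) => /= e.
    by rewrite -{1}[y]can2 -e can1.
  congr sup; apply/seteqP; split => _ [x _ <-].
  - exists (pi (gh' (lift x))) => //.
    rewrite !rhoE -fl // /ff can2 -normrN; congr `|_|; rewrite opprB //.
  - exists (pi (gh (lift x))) => //.
    rewrite !rhoE -fl // /ff can1 -normrN; congr `|_|; rewrite opprB //.
move=> gh hh hg hh'.
have [[_ [_ cg]] [_ [_ ch]]] := (hg, hh').
apply: ge_sup => // _ [x _ <-].
have -> : rho lift theta x (gh \o hh) =
    ff _ _ theta gh (lift (pi (hh (lift x)))) + ff _ _ theta hh (lift x).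
  by rewrite -fl // /rho /ff /= addrA subrK.
apply: le_trans (ler_normD _ _) _.
apply: lerD; apply: ub_le_sup; try exact: bnd.
  by exists (pi (hh (lift x))).
by exists x.
Qed.
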